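(* Let $\alpha\in(1,3)$, $n\ge2$, $\mu\ge0$, and let $V(r,\varphi)$ be the Maxwell-ring potential in polar coordinates described in the context. Then there is a positive function $\omega(r,\varphi)$ such that $$V_\varphi(r,\varphi)=-\sin(n\varphi)\,\omega(r,\varphi)$$ for all $(r,\varphi)$ in the domain of $V$ ($r>0$, $re^{i\varphi}$ not a vertex $e^{ij\zeta}$).
   Context: Let $\zeta=2\pi/n$, $\phi_\alpha'(r)=-r^{-\alpha}$, $s=2^{-\alpha}\sum_{j=1}^{n-1}\sin^{-(\alpha-1)}(j\zeta/2)$. In polar coordinates $u=re^{i\varphi}$, the planar potential of a satellite attracted by $n$ unit masses at $e^{ij\zeta}$ and a central mass $\mu$ at $0$ (rescaled) is $$V(r,\varphi)=\frac{r^2}{2}+\frac{\mu}{s+\mu}\phi_\alpha(r)+\sum_{j=1}^n\frac1{s+\mu}\phi_\alpha\big(\|r-e^{i(j\zeta-\varphi)}\|\big).$$ *)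

(* Defs.v *)
From Stdlib Require Import Reals.
From Coquelicot Require Import Coquelicot.
Open Scope R_scope.

Definition zeta (n : nat) : R := 2 * PI / INR n.

(* A primitive of phi'(r) = - r^(-alpha):  phi(r) = r^(1-alpha)/(alpha-1).
   (The additive constant is irrelevant for V_phi.) *)
Definition phi_alpha (alpha r : R) : R := Rpower r (1 - alpha) / (alpha - 1).

Definition s_const (alpha : R) (n : nat) : R :=
  Rpower 2 (- alpha) *
  sum_n_m (fun j => Rpower (sin (INR j * zeta n / 2)) (- (alpha - 1))) 1 (n - 1).

(* Euclidean norm of the complex number  r - e^{i theta}. *)
Definition dist_ring (r theta : R) : R :=
  sqrt ((r - cos theta) ^ 2 + (sin theta) ^ 2).

Definition V (alpha mu : R) (n : nat) (r varphi : R) : R :=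
  r ^ 2 / 2
  + mu / (s_const alpha n + mu) * phi_alpha alpha r
  + sum_n_m (fun j => / (s_const alpha n + mu) *
                      phi_alpha alpha (dist_ring r (INR j * zeta n - varphi))) 1 n.

Definition in_domain (n : nat) (r varphi : R) : Prop :=
  0 < r /\
  forall j : nat, ~ (r * cos varphi = cos (INR j * zeta n) /\
                     r * sin varphi = sin (INR j * zeta n)).

(* Main.v *)
Require Import Defs.
From Stdlib Require Import Reals Lra Lia.
From Coquelicot Require Import Coquelicot.
From Coquelicot Require Import Complex.
Open Scope R_scope.

Fixpoint csum (f : nat -> C) (n : nat) : C :=
  match n with O => RtoC 0 | S m => Cplus (csum f m) (f m) end.
Fixpoint rsum (f : nat -> R) (n : nat) : R :=
  match n with O => 0 | S m => rsum f m + f m end.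

Lemma csum_plus f g n : csum (fun k => f k + g k)%C n = (csum f n + csum g n)%C.
Proof. induction n; simpl. ring. rewrite IHn. ring. Qed.
Lemma csum_scal c f n : csum (fun k => c * f k)%C n = (c * csum f n)%C.
Proof. induction n; simpl. ring. rewrite IHn. ring. Qed.
Lemma csum_ext f g n : (forall k, (k<n)%nat -> f k = g k) -> csum f n = csum g n.
Proof. induction n; simpl; intros H. auto. rewrite IHn, H; auto. Qed.
Lemma rsum_ext f g n : (forall k, (k<n)%nat -> f k = g k) -> rsum f n = rsum g n.
Proof. induction n; simpl; intros H. auto. rewrite IHn, H; auto. Qed.
Lemma re_csum f n : Re (csum f n) = rsum (fun k => Re (f k)) n.
Proof. induction n; simpl. auto. rewrite <- IHn. reflexivity. Qed.
Lemma csum_const c n : csum (fun _ => c) n = (RtoC (INR n) * c)%C.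
Proof. induction n. simpl. ring. rewrite S_INR. simpl csum. rewrite IHn.
  unfold RtoC, Cplus, Cmult; simpl. f_equal; ring. Qed.

Definition ee (x:R) : C := (cos x, sin x).
Lemma ee_mult x y : (ee x * ee y)%C = ee (x+y).
Proof. unfold ee, Cmult; simpl. rewrite cos_plus, sin_plus. f_equal; ring. Qed.
Lemma ee_pow x k : Cpow (ee x) k = ee (INR k * x).
Proof. induction k. simpl. unfold ee. rewrite Rmult_0_l, cos_0, sin_0. reflexivity.
  rewrite Cpow_S, IHk, ee_mult, S_INR. f_equal. ring. Qed.

Lemma csum_S f n : csum f (S n) = (csum f n + f n)%C.
Proof. reflexivity. Qed.
Lemma geom_c (z : C) n : ((1 - z) * csum (fun a => Cpow z a) n = 1 - Cpow z n)%C.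
Proof. induction n. simpl. ring. rewrite csum_S.
  rewrite Cmult_plus_distr_l, IHn, Cpow_S. ring. Qed.
Lemma geom_c1 (u : C) n : ((1 - u) * csum (fun j => Cpow u (S j)) n = u - Cpow u (S n))%C.
Proof. induction n. simpl. ring. rewrite csum_S.
  rewrite Cmult_plus_distr_l, IHn. rewrite (Cpow_S u (S n)). ring. Qed.

Lemma nzeta n : (n > 0)%nat -> INR n * zeta n = 2 * PI.
Proof. intros. unfold zeta. field. apply not_0_INR. lia. Qed.

Lemma ee_2pik (k : nat) : ee (INR k * (2 * PI)) = 1%C.
Proof. unfold ee. replace (INR k * (2*PI)) with (0 + INR k * 2 * PI) by ring.
  replace (0 + INR k * 2 * PI) with (0 + 2 * INR k * PI) by ring.
  rewrite cos_period, sin_period, cos_0, sin_0. reflexivity. Qed.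

Lemma cos_lt_1 x : 0 < x < 2 * PI -> cos x < 1.
Proof. intros H. replace x with (2 * (x/2)) by field. rewrite cos_2a_sin.
  assert (0 < sin (x/2)) by (apply sin_gt_0; lra). nra. Qed.

Lemma cmult_cancel (a x : C) : a <> 0%C -> (a * x)%C = 0%C -> x = 0%C.
Proof. intros H1 H2. replace x with (/a * (a * x))%C by (field; auto). rewrite H2. ring. Qed.

Lemma sum_ee_zero n a phi : (1 <= a < n)%nat ->
  csum (fun j => ee (INR a * (INR (S j) * zeta n - phi))) n = 0%C.
Proof. intros Ha.
  set (u := ee (INR a * zeta n)).
  rewrite (csum_ext _ (fun j => ee (- (INR a * phi)) * Cpow u (S j))%C).
  2:{ intros k _. unfold u. rewrite ee_pow, ee_mult. f_equal. ring. }
  rewrite csum_scal.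
  assert (Hu : (u ^ n)%C = 1%C).
  { unfold u. rewrite ee_pow. rewrite <- (ee_2pik a). f_equal.
    rewrite <- (nzeta n) by lia. ring. }
  assert (Hnz : (1 - u)%C <> 0%C).
  { unfold u, ee. intros H. injection H. intros _ H1.
    assert (cos (INR a * zeta n) < 1); [|lra].
    apply cos_lt_1. unfold zeta. split.
    - apply Rmult_lt_0_compat. apply lt_0_INR; lia.
      apply Rdiv_lt_0_compat. pose PI_RGT_0; lra. apply lt_0_INR; lia.
    - replace (INR a * (2 * PI / INR n)) with ((2*PI) * (INR a / INR n)) by (field; apply not_0_INR; lia).
      assert (INR a / INR n < 1).
      { apply Rmult_lt_reg_r with (INR n). apply lt_0_INR; lia.
        unfold Rdiv. rewrite Rmult_assoc, Rinv_l, Rmult_1_r, Rmult_1_l. apply lt_INR; lia.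
        apply not_0_INR; lia. }
      pose PI_RGT_0. nra. }
  assert (Hs : csum (fun j => Cpow u (S j)) n = 0%C).
  { pose proof (geom_c1 u n) as G.
    assert (E : (u - Cpow u (S n))%C = 0%C) by (rewrite Cpow_S, Hu; ring).
    rewrite E in G.
    apply (cmult_cancel _ _ Hnz G). }
  rewrite Hs. ring. Qed.

Definition th n phi j := INR (S j) * zeta n - phi.

Lemma zpow_ee r x k : Cpow (RtoC r * ee x)%C k = (RtoC (r ^ k) * ee (INR k * x))%C.
Proof. rewrite Cpow_mult_l, ee_pow, RtoC_pow. reflexivity. Qed.

Lemma sumG n rho phi m : (1 <= m <= n)%nat ->
  csum (fun j => csum (fun a => Cpow (RtoC rho * ee (th n phi j))%C a) m) n = RtoC (INR n).
Proof.
  induction m; intros Hm. lia.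
  destruct (Nat.eq_dec m 0) as [->|Hm0].
  - rewrite (csum_ext _ (fun _ => 1%C)). rewrite csum_const. unfold RtoC, Cmult; simpl; f_equal; ring.
    intros k _. simpl. ring.
  - rewrite (csum_ext _ (fun j => csum (fun a => Cpow (RtoC rho * ee (th n phi j))%C a) m
                 + RtoC (rho ^ m) * ee (INR m * th n phi j))%C).
    2:{ intros k _. rewrite csum_S, zpow_ee. reflexivity. }
    rewrite csum_plus, IHm by lia. rewrite csum_scal. unfold th. rewrite sum_ee_zero by lia.
    unfold RtoC, Cplus, Cmult; simpl; f_equal; ring.
Qed.

Lemma one_minus_nz r x : 0 <= r < 1 -> (1 - RtoC r * ee x)%C <> 0%C.
Proof. intros Hr H. unfold ee, RtoC, Cminus, Cmult, Cplus, Copp in H. simpl in H.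
  injection H. intros _ H1. pose proof (COS_bound x). nra. Qed.

Lemma ee_shift x k : ee (INR k * (2 * PI) + x) = ee x.
Proof. rewrite <- ee_mult, ee_2pik. unfold ee, Cmult; simpl. f_equal; ring. Qed.

Lemma poisson_c n rho phi : (1 <= n)%nat -> 0 <= rho < 1 ->
  csum (fun j => / (1 - RtoC rho * ee (th n phi j)))%C n =
  (RtoC (INR n) / (1 - RtoC (rho ^ n) * ee (- (INR n * phi))))%C.
Proof.
  intros Hn Hr.
  assert (Hw : 0 <= rho ^ n < 1).
  { split. apply pow_le; lra. destruct n. lia. apply pow_lt_1_compat. lra. lia. }
  set (w := (RtoC (rho ^ n) * ee (- (INR n * phi)))%C).
  assert (Hwn : (1 - w)%C <> 0%C) by (apply one_minus_nz; auto).
  rewrite (csum_ext _ (fun j => / (1 - w) * csum (fun a => Cpow (RtoC rho * ee (th n phi j))%C a) n)%C).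
  - rewrite csum_scal, sumG by lia. unfold Cdiv. ring.
  - intros k _. pose proof (geom_c (RtoC rho * ee (th n phi k))%C n) as G.
    rewrite zpow_ee in G.
    assert (E : (RtoC (rho ^ n) * ee (INR n * th n phi k))%C = w).
    { unfold w. f_equal. unfold th. rewrite <- (ee_shift (- (INR n * phi)) (S k)). f_equal.
      rewrite <- (nzeta n) by lia. ring. }
    rewrite E in G.
    assert (HG : csum (fun a => Cpow (RtoC rho * ee (th n phi k))%C a) n <> 0%C).
    { intro HG. rewrite HG in G. apply Hwn. rewrite <- G. ring. }
    rewrite <- G. field. split; auto. apply one_minus_nz; auto.
Qed.

Lemma re_inv r x : 0 <= r < 1 ->
  Re (/ (1 - RtoC r * ee x))%C = (1 - r * cos x) / (1 + r ^ 2 - 2 * r * cos x).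
Proof. intros Hr. unfold Cinv, ee, RtoC, Cminus, Cmult, Cplus, Copp, Re. simpl.
  assert (H : sin x * sin x = 1 - cos x * cos x) by (pose proof (sin2_cos2 x); unfold Rsqr in *; lra).
  f_equal; [ring|].
  transitivity (1 + r*r*(sin x * sin x + cos x * cos x) - 2*r*cos x); [ring|]. rewrite H; ring. Qed.

Lemma poisson_r n rho phi : (1 <= n)%nat -> 0 <= rho < 1 ->
  rsum (fun j => (1 - rho * cos (th n phi j)) / (1 + rho ^ 2 - 2 * rho * cos (th n phi j))) n =
  INR n * (1 - rho ^ n * cos (INR n * phi)) / (1 + (rho ^ n) ^ 2 - 2 * rho ^ n * cos (INR n * phi)).
Proof.
  intros Hn Hr.
  assert (Hw : 0 <= rho ^ n < 1).
  { split. apply pow_le; lra. destruct n. lia. apply pow_lt_1_compat. lra. lia. }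
  rewrite (rsum_ext _ (fun j => Re (/ (1 - RtoC rho * ee (th n phi j)))%C)).
  2:{ intros. rewrite re_inv; auto. }
  rewrite <- re_csum, poisson_c by auto. unfold Cdiv. 
  pose proof (one_minus_nz (rho ^ n) (- (INR n * phi)) Hw) as Hnz.
  set (w := (1 - RtoC (rho ^ n) * ee (- (INR n * phi)))%C) in *.
  replace (RtoC (INR n) * / w)%C with (RtoC (INR n) * (/ w))%C by reflexivity.
  assert (Re (RtoC (INR n) * / w)%C = INR n * Re (/ w)) by (unfold Re, RtoC, Cmult; simpl; ring).
  rewrite H. unfold w. rewrite re_inv by auto. rewrite cos_neg. field.
  assert (0 < 1 + (rho ^ n) ^ 2 - 2 * rho ^ n * cos (INR n * phi)); [|lra].
  pose proof (COS_bound (INR n * phi)). nra.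
Qed.

Lemma rsum_derive (f : nat -> R -> R) (f' : nat -> R) n x :
  (forall k, (k < n)%nat -> is_derive (f k) x (f' k)) ->
  is_derive (fun t => rsum (fun k => f k t) n) x (rsum f' n).
Proof. induction n; intros H; simpl.
  - auto_derive; auto.
  - apply (is_derive_plus (fun t => rsum (fun k => f k t) n) (f n)); auto. Qed.

Lemma Dpos rho x : 0 <= rho < 1 -> 0 < 1 + rho ^ 2 - 2 * rho * cos x.
Proof. intros. pose proof (COS_bound x). nra. Qed.

Lemma key_rho n rho phi : (1 <= n)%nat -> 0 < rho < 1 ->
  rsum (fun j => sin (th n phi j) / (1 + rho ^ 2 - 2 * rho * cos (th n phi j)) ^ 2) n =
  - sin (INR n * phi) * (INR n ^ 2 * rho ^ n * (1 - (rho ^ n) ^ 2) /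
      (rho * (1 - rho ^ 2) * (1 + (rho ^ n) ^ 2 - 2 * rho ^ n * cos (INR n * phi)) ^ 2)).
Proof.
  intros Hn Hr.
  assert (Hw : 0 <= rho ^ n < 1).
  { split. apply pow_le; lra. destruct n. lia. apply pow_lt_1_compat. lra. lia. }
  set (F := fun t => rsum (fun j => (1 - rho * cos (th n t j)) / (1 + rho ^ 2 - 2 * rho * cos (th n t j))) n).
  set (G := fun t => INR n * (1 - rho ^ n * cos (INR n * t)) / (1 + (rho ^ n) ^ 2 - 2 * rho ^ n * cos (INR n * t))).
  assert (D1 : is_derive F phi (rsum (fun j => rho * (1 - rho^2) * (sin (th n phi j) / (1 + rho ^ 2 - 2 * rho * cos (th n phi j)) ^ 2)) n)).
  { unfold F. apply (rsum_derive (fun j t => (1 - rho * cos (th n t j)) / (1 + rho ^ 2 - 2 * rho * cos (th n t j)))).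
    intros k _. unfold th. set (c := INR (S k) * zeta n).
    pose proof (Dpos rho (c + - phi) ltac:(lra)).
    auto_derive. lra. unfold Rminus. field. lra. }
  assert (D2 : is_derive G phi (- sin (INR n * phi) * (INR n ^ 2 * rho ^ n * (1 - (rho ^ n) ^ 2) /
      (1 + (rho ^ n) ^ 2 - 2 * rho ^ n * cos (INR n * phi)) ^ 2))).
  { unfold G. pose proof (Dpos (rho ^ n) (INR n * phi) Hw).
    auto_derive. lra. field. lra. }
  assert (FG : forall t, F t = G t) by (intro t; unfold F, G; apply poisson_r; auto; lra).
  assert (D1' : is_derive G phi (rsum (fun j => rho * (1 - rho^2) * (sin (th n phi j) / (1 + rho ^ 2 - 2 * rho * cos (th n phi j)) ^ 2)) n)).
  { apply (is_derive_ext F); auto. }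
  pose proof (is_derive_unique _ _ _ D1') as U1. pose proof (is_derive_unique _ _ _ D2) as U2.
  rewrite U1 in U2.
  assert (Hsc : forall c f m, rsum (fun j => c * f j) m = c * rsum f m).
  { intros c f m. induction m; simpl. ring. rewrite IHm. ring. }
  rewrite Hsc in U2.
  assert (0 < rho * (1 - rho^2)) by nra.
  apply (Rmult_eq_reg_l (rho * (1 - rho ^ 2))); [|lra]. rewrite U2. field.
  pose proof (Dpos (rho ^ n) (INR n * phi) Hw). repeat split; nra.
Qed.

Lemma rsum_scal c f m : rsum (fun j => c * f j) m = c * rsum f m.
Proof. induction m; simpl. ring. rewrite IHm. ring. Qed.

Lemma key_s n r s phi : (1 <= n)%nat -> 0 < r -> 0 < s ->
  exists q, 0 < q /\
  rsum (fun j => sin (th n phi j) / (s + (1 + r ^ 2 - 2 * r * cos (th n phi j))) ^ 2) n =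
  - sin (INR n * phi) * q.
Proof.
  intros Hn Hr Hs.
  set (A := 1 + r ^ 2 + s).
  assert (HA : 0 < A - 2 * r) by (unfold A; pose proof (pow2_ge_0 (1 - r)); nra).
  assert (Hd : 0 <= A ^ 2 - 4 * r ^ 2) by nra.
  set (y := sqrt (A ^ 2 - 4 * r ^ 2)).
  assert (Hy0 : 0 <= y) by apply sqrt_pos.
  assert (Hy2 : y * y = A ^ 2 - 4 * r ^ 2) by (apply sqrt_sqrt; auto).
  assert (HyA : y < A) by nra.
  assert (Hy1 : A - 2 * r < y) by nra.
  set (rho := (A - y) / (2 * r)).
  assert (Hrho : 0 < rho < 1).
  { unfold rho. split. apply Rdiv_lt_0_compat; lra.
    apply Rmult_lt_reg_r with (2 * r). lra. unfold Rdiv. rewrite Rmult_assoc, Rinv_l; lra. }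
  assert (Hrel : r * (1 + rho ^ 2) = A * rho).
  { assert (E1 : r * (1 + rho ^ 2) - A * rho = (4 * r ^ 2 + y * y - A ^ 2) / (4 * r))
      by (unfold rho; field; lra).
    rewrite Hy2 in E1. replace (4 * r ^ 2 + (A ^ 2 - 4 * r ^ 2) - A ^ 2) with 0 in E1 by ring.
    unfold Rdiv in E1. rewrite Rmult_0_l in E1. lra. }
  assert (Hpw : 0 < rho ^ n) by (apply pow_lt; lra).
  assert (Hw : rho ^ n < 1) by (destruct n; [lia| apply pow_lt_1_compat; lra || lia]).
  pose proof (key_rho n rho phi Hn Hrho) as K.
  set (E := 1 + (rho ^ n) ^ 2 - 2 * rho ^ n * cos (INR n * phi)) in K.
  assert (HE : 0 < E) by (apply Dpos; lra).
  exists ((rho / r) ^ 2 * (INR n ^ 2 * rho ^ n * (1 - (rho ^ n) ^ 2) / (rho * (1 - rho ^ 2) * E ^ 2))).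
  split.
  - assert (0 < INR n) by (apply lt_0_INR; lia).
    apply Rmult_lt_0_compat. apply pow_lt. apply Rdiv_lt_0_compat; lra.
    apply Rdiv_lt_0_compat. apply Rmult_lt_0_compat.
    apply Rmult_lt_0_compat; [apply pow_lt; lra | lra]. nra.
    apply Rmult_lt_0_compat. nra. apply pow_lt; lra.
  - rewrite (rsum_ext _ (fun j => (rho / r) ^ 2 * (sin (th n phi j) / (1 + rho ^ 2 - 2 * rho * cos (th n phi j)) ^ 2))).
    + rewrite rsum_scal, K. ring.
    + intros k _. pose proof (Dpos rho (th n phi k) ltac:(lra)).
      assert (Eq : s + (1 + r ^ 2 - 2 * r * cos (th n phi k)) = (r / rho) * (1 + rho ^ 2 - 2 * rho * cos (th n phi k))).
      { transitivity (A - 2 * r * cos (th n phi k)). unfold A; ring.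
        transitivity (r * (1 + rho ^ 2) / rho - 2 * r * cos (th n phi k)).
        rewrite Hrel. field. lra. field. lra. }
      rewrite Eq. field. lra.
Qed.

Definition kk (d u : R) := exp (d * u) / (exp u + 1) ^ 2.

Lemma kk_cont d u : continuous (kk d) u.
Proof. apply (ex_derive_continuous (kk d)). unfold kk. pose proof (exp_pos u). auto_derive. apply Rgt_not_eq. nra. Qed.

Lemma kk_pos d u : 0 < kk d u.
Proof. unfold kk. pose proof (exp_pos u). pose proof (exp_pos (d*u)).
  apply Rdiv_lt_0_compat; auto. apply pow_lt; lra. Qed.

Lemma kk_le1 d u : kk d u <= exp (d * u).
Proof. unfold kk. pose proof (exp_pos u). pose proof (exp_pos (d*u)).
  apply Rmult_le_reg_r with ((exp u + 1) ^ 2). apply pow_lt; lra.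
  unfold Rdiv. rewrite Rmult_assoc, Rinv_l. 2: (apply pow_nonzero; lra). nra. Qed.

Lemma kk_le2 d u : kk d u <= exp ((d - 2) * u).
Proof. unfold kk. pose proof (exp_pos u). pose proof (exp_pos (d*u)).
  replace (exp ((d - 2) * u)) with (exp (d * u) / (exp u) ^ 2).
  2:{ replace ((d-2)*u) with (d*u + - (u + u)) by ring. rewrite exp_plus, exp_Ropp, exp_plus. field. lra. }
  apply Rmult_le_compat_l. lra. apply Rinv_le_contravar. apply pow_lt; lra. nra. Qed.

Lemma ex_kk d a b : ex_RInt (kk d) a b.
Proof. apply (@ex_RInt_continuous R_CompleteNormedModule). intros. apply kk_cont. Qed.

Lemma scale_id d x v : 0 < x ->
  exp (d * v) / (exp v + x) ^ 2 = Rpower x (d - 2) * kk d (v - ln x).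
Proof. intros Hx.
  assert (E1 : exp (v - ln x) = exp v / x).
  { unfold Rminus. rewrite exp_plus, exp_Ropp, exp_ln by auto. reflexivity. }
  assert (E2 : exp ((d - 2) * ln x) * exp (d * (v - ln x)) = exp (d * v) / (x * x)).
  { rewrite <- exp_plus. replace ((d - 2) * ln x + d * (v - ln x)) with (d * v + - (ln x + ln x)) by ring.
    rewrite exp_plus, exp_Ropp, exp_plus, exp_ln by auto. field. lra. }
  unfold Rpower, kk. rewrite E1. unfold Rdiv at 2. rewrite <- Rmult_assoc, E2.
  pose proof (exp_pos v). field. split; lra. Qed.

Lemma RInt_scalR (f : R -> R) a b c : ex_RInt f a b -> RInt (fun x => c * f x) a b = c * RInt f a b.
Proof. intros H. exact (@RInt_scal R_CompleteNormedModule f a b c H). Qed.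
Lemma RInt_plusR (f g : R -> R) a b : ex_RInt f a b -> ex_RInt g a b ->
  RInt (fun x => f x + g x) a b = RInt f a b + RInt g a b.
Proof. intros H1 H2. exact (@RInt_plus R_CompleteNormedModule f g a b H1 H2). Qed.
Lemma RInt_shift (f : R -> R) a b v : ex_RInt f (a + v) (b + v) ->
  RInt (fun y => f (y + v)) a b = RInt f (a + v) (b + v).
Proof. intros H. 
  pose proof (@RInt_comp_lin R_CompleteNormedModule f 1 v a b) as E.
  rewrite !Rmult_1_l in E. rewrite <- E by auto. apply RInt_ext. intros.
  unfold scal; simpl; unfold mult; simpl. rewrite !Rmult_1_l. reflexivity. Qed.

Lemma int_scale d x a b : 0 < x ->
  RInt (fun v => exp (d * v) / (exp v + x) ^ 2) a b = Rpower x (d - 2) * RInt (kk d) (a - ln x) (b - ln x).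
Proof. intros Hx.
  rewrite (RInt_ext _ (fun v => Rpower x (d - 2) * kk d (v + - ln x))).
  2:{ intros. rewrite scale_id by auto. reflexivity. }
  rewrite RInt_scalR. rewrite RInt_shift. unfold Rminus. reflexivity. apply ex_kk.
  apply (@ex_RInt_continuous R_CompleteNormedModule). intros z _.
  apply (ex_derive_continuous (fun v => kk d (v + - ln x))). unfold kk.
  pose proof (exp_pos (z + - ln x)). auto_derive. apply Rgt_not_eq. nra.
Qed.
Lemma absI d a b M : (forall u, Rmin a b <= u <= Rmax a b -> kk d u <= M) ->
  Rabs (RInt (kk d) a b) <= Rabs (b - a) * M.
Proof. intros H. destruct (Rle_dec a b) as [Hab|Hab].
  - rewrite (Rabs_right (b - a)) by lra. apply abs_RInt_le_const; auto. apply ex_kk.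
    intros t Ht. pose proof (kk_pos d t). rewrite Rabs_right by lra. apply H.
    rewrite Rmin_left, Rmax_right; lra.
  - assert (E : RInt (kk d) a b = - RInt (kk d) b a).
    { rewrite <- (@opp_RInt_swap R_CompleteNormedModule (kk d) b a) by apply ex_kk.
      unfold opp; simpl. ring. }
    rewrite E, Rabs_Ropp. rewrite (Rabs_left (b - a)) by lra.
    replace (- (b - a)) with (a - b) by ring.
    apply abs_RInt_le_const; try lra. apply ex_kk.
    intros t Ht. pose proof (kk_pos d t). rewrite Rabs_right by lra. apply H.
    rewrite Rmin_right, Rmax_left; lra.
Qed.

Lemma exp_le x y : x <= y -> exp x <= exp y.
Proof. intros [H|H]. left; apply exp_increasing; auto. subst; lra. Qed.

Lemma ChaslesK d a b c : RInt (kk d) a b + RInt (kk d) b c = RInt (kk d) a c.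
Proof. exact (@RInt_Chasles R_CompleteNormedModule (kk d) a b c (ex_kk d a b) (ex_kk d b c)). Qed.

Lemma shift_err d c T : 0 < d < 1 -> Rabs c <= T ->
  Rabs (RInt (kk d) (-T - c) (T - c) - RInt (kk d) (-T) T) <= 2 * Rabs c * exp (d * Rabs c) * exp (- (d * T)).
Proof.
  intros Hd HT.
  rewrite <- (ChaslesK d (-T - c) (-T) (T - c)), <- (ChaslesK d (-T) (T - c) T).
  replace (RInt (kk d) (- T - c) (- T) + RInt (kk d) (- T) (T - c) - (RInt (kk d) (- T) (T - c) + RInt (kk d) (T - c) T))
    with (RInt (kk d) (- T - c) (- T) - RInt (kk d) (T - c) T) by ring.
  set (M := exp (d * Rabs c) * exp (- (d * T))).
  assert (B1 : Rabs (RInt (kk d) (- T - c) (- T)) <= Rabs c * M).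
  { replace (Rabs c) with (Rabs (- T - (- T - c))) by (f_equal; ring).
    apply absI. intros u Hu.
    assert (u <= - T + Rabs c).
    { pose proof (Rle_abs c). pose proof (Rle_abs (- c)). rewrite Rabs_Ropp in *.
      destruct (Rle_dec (-T - c) (-T)).
      rewrite Rmax_right in Hu; lra. rewrite Rmax_left in Hu; lra. }
    eapply Rle_trans. apply kk_le1. unfold M. rewrite <- exp_plus. apply exp_le. nra. }
  assert (B2 : Rabs (RInt (kk d) (T - c) T) <= Rabs c * M).
  { replace (Rabs c) with (Rabs (T - (T - c))) by (f_equal; ring).
    apply absI. intros u Hu.
    assert (T - Rabs c <= u).
    { pose proof (Rle_abs c). pose proof (Rle_abs (- c)). rewrite Rabs_Ropp in *.
      destruct (Rle_dec (T - c) T).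
      rewrite Rmin_left in Hu; lra. rewrite Rmin_right in Hu; lra. }
    eapply Rle_trans. apply kk_le2. unfold M. rewrite <- exp_plus. apply exp_le.
    pose proof (Rabs_pos c). nra. }
  eapply Rle_trans. apply Rabs_triang. rewrite Rabs_Ropp.
  replace (2 * Rabs c * exp (d * Rabs c) * exp (- (d * T))) with (Rabs c * M + Rabs c * M) by (unfold M; ring).
  lra.
Qed.

Lemma rsum_RInt (f : nat -> R -> R) n a b : (forall j, (j < n)%nat -> ex_RInt (f j) a b) ->
  ex_RInt (fun v => rsum (fun j => f j v) n) a b /\
  RInt (fun v => rsum (fun j => f j v) n) a b = rsum (fun j => RInt (f j) a b) n.
Proof.
  induction n; intros H; simpl.
  - split. apply (@ex_RInt_const R_CompleteNormedModule).
    rewrite (@RInt_const R_CompleteNormedModule). unfold scal; simpl; unfold mult; simpl. ring.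
  - destruct IHn as [E1 E2]. intros; apply H; lia.
    split. apply (@ex_RInt_plus R_CompleteNormedModule); auto.
    rewrite RInt_plusR; auto. rewrite E2. reflexivity.
Qed.

Lemma rsum_ex_derive (f : nat -> R -> R) n x :
  (forall k, (k < n)%nat -> ex_derive (f k) x) ->
  ex_derive (fun t => rsum (fun k => f k t) n) x.
Proof. induction n; intros H; simpl.
  - apply ex_derive_const.
  - apply (ex_derive_plus (fun t => rsum (fun k => f k t) n) (f n)); auto. Qed.

Lemma rsum_minus f g n : rsum f n - rsum g n = rsum (fun j => f j - g j) n.
Proof. induction n; simpl. ring. rewrite <- IHn. ring. Qed.

Lemma rsum_le f g n : (forall j, (j < n)%nat -> f j <= g j) -> rsum f n <= rsum g n.
Proof. induction n; simpl; intros H. lra. pose proof (H n ltac:(lia)). pose proof (IHn ltac:(intros; apply H; lia)). lra. Qed.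

Lemma rsum_abs f n : Rabs (rsum f n) <= rsum (fun j => Rabs (f j)) n.
Proof. induction n; simpl. rewrite Rabs_R0; lra. eapply Rle_trans. apply Rabs_triang. lra. Qed.

Lemma rsum_ge_term f n k : (forall j, (j < n)%nat -> 0 <= f j) -> (k < n)%nat -> f k <= rsum f n.
Proof. induction n; intros H Hk. lia. simpl.
  assert (0 <= rsum f n) by (apply (Rle_trans _ (rsum (fun _ => 0) n));
    [clear; induction n; simpl; lra | apply rsum_le; intros; apply H; lia]).
  destruct (Nat.eq_dec k n). subst. lra.
  pose proof (IHn ltac:(intros; apply H; lia) ltac:(lia)). pose proof (H n ltac:(lia)). lra. Qed.

Lemma pos_int (h : R -> R) T : (forall x, continuous h x) -> (forall x, 0 < h x) -> 1 <= T ->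
  0 < RInt h (-1) 1 <= RInt h (-T) T.
Proof.
  intros Hc Hp HT.
  assert (Ex : forall a b, ex_RInt h a b) by (intros; apply (@ex_RInt_continuous R_CompleteNormedModule); auto).
  assert (Ch : forall a b c, RInt h a b + RInt h b c = RInt h a c)
    by (intros; exact (@RInt_Chasles R_CompleteNormedModule h a b c (Ex a b) (Ex b c))).
  split.
  - apply RInt_gt_0. lra. intros; auto. intros; auto.
  - rewrite <- (Ch (-T) (-1) T), <- (Ch (-1) 1 T).
    assert (0 <= RInt h (-T) (-1)) by (apply RInt_ge_0; [lra | auto | intros; left; auto]).
    assert (0 <= RInt h 1 T) by (apply RInt_ge_0; [lra | auto | intros; left; auto]).
    lra.
Qed.

Lemma exp_small d Mb eps T0 : 0 < d -> 0 <= Mb -> 0 < eps ->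
  exists T, T0 <= T /\ Mb * exp (- (d * T)) < eps.
Proof.
  intros Hd HM He. exists (Rmax T0 (Mb / (d * eps)) + 1). split.
  pose proof (Rmax_l T0 (Mb / (d * eps))). lra.
  set (T := Rmax T0 (Mb / (d * eps)) + 1).
  assert (HT : Mb / (d * eps) < T) by (pose proof (Rmax_r T0 (Mb / (d * eps))); unfold T; lra).
  pose proof (exp_ineq1_le (d * T)).
  assert (Mb < eps * (d * T)).
  { apply Rmult_lt_compat_l with (r := d * eps) in HT; [|nra].
    replace (d * eps * (Mb / (d * eps))) with Mb in HT by (field; lra). nra. }
  rewrite exp_Ropp. pose proof (exp_pos (d * T)).
  apply Rmult_lt_reg_r with (exp (d * T)); auto. rewrite Rmult_assoc, Rinv_l by lra. nra.
Qed.

Lemma key_main n phi r d : (1 <= n)%nat -> 0 < r -> 0 < d < 1 ->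
  (forall j, (j < n)%nat -> 0 < 1 + r ^ 2 - 2 * r * cos (th n phi j)) ->
  exists w, 0 < w /\
    rsum (fun j => sin (th n phi j) * Rpower (1 + r ^ 2 - 2 * r * cos (th n phi j)) (d - 2)) n =
    - sin (INR n * phi) * w.
Proof.
  intros Hn Hr Hd HD.
  set (Dj := fun j => 1 + r ^ 2 - 2 * r * cos (th n phi j)) in *.
  set (S := rsum (fun j => sin (th n phi j) * Rpower (Dj j) (d - 2)) n).
  set (sn := sin (INR n * phi)).
  cut (exists w, 0 < w /\ S = - sn * w). { intros [w Hw]; exists w; exact Hw. }
  set (fj := fun j v => sin (th n phi j) * (exp (d * v) / (exp v + Dj j) ^ 2)).
  set (F := fun v => rsum (fun j => fj j v) n).
  assert (Fsign : forall v, exists q, 0 < q /\ F v = - sn * q).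
  { intro v. destruct (key_s n r (exp v) phi Hn Hr (exp_pos v)) as [q [Hq Eq]].
    exists (exp (d * v) * q). split. apply Rmult_lt_0_compat; auto. apply exp_pos.
    unfold F, fj. rewrite (rsum_ext _ (fun j => exp (d * v) * (sin (th n phi j) / (exp v + (1 + r ^ 2 - 2 * r * cos (th n phi j))) ^ 2))).
    rewrite rsum_scal, Eq. unfold sn. ring.
    intros k Hk. unfold Dj. field. pose proof (exp_pos v). pose proof (HD k Hk). unfold Dj in *. cbv beta in *. apply Rgt_not_eq. lra. }
  assert (fj_der : forall j v, (j < n)%nat -> ex_derive (fj j) v).
  { intros j v Hj. unfold fj. pose proof (HD j Hj). pose proof (exp_pos v). unfold Dj in *. cbv beta in *. auto_derive. apply Rgt_not_eq. nra. }
  assert (Fcont : forall v, continuous F v).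
  { intro v. apply (ex_derive_continuous F). unfold F. apply rsum_ex_derive. intros; auto. }
  assert (fj_int : forall j a b, (j < n)%nat -> ex_RInt (fj j) a b).
  { intros. apply (@ex_RInt_continuous R_CompleteNormedModule). intros.
    apply (ex_derive_continuous (fj j)). auto. }
  set (K := fun T => RInt (kk d) (-T) T).
  set (Cmax := rsum (fun j => Rabs (ln (Dj j))) n).
  set (Mb := rsum (fun j => Rabs (sin (th n phi j)) * Rpower (Dj j) (d - 2) * (2 * Rabs (ln (Dj j)) * exp (d * Rabs (ln (Dj j))))) n).
  assert (HMb : 0 <= Mb).
  { apply (Rle_trans _ (rsum (fun _ => 0) n)). clear; induction n; simpl; lra.
    apply rsum_le. intros j Hj. pose proof (Rabs_pos (sin (th n phi j))). pose proof (Rabs_pos (ln (Dj j))).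
    pose proof (exp_pos (Rpower (Dj j) (d - 2))). unfold Rpower. pose proof (exp_pos ((d - 2) * ln (Dj j))).
    pose proof (exp_pos (d * Rabs (ln (Dj j)))).
    apply Rmult_le_pos. apply Rmult_le_pos; lra. apply Rmult_le_pos; lra. }
  assert (Err : forall T, Cmax <= T -> Rabs (S * K T - RInt F (-T) T) <= Mb * exp (- (d * T))).
  { intros T HT.
    assert (RF : RInt F (-T) T = rsum (fun j => sin (th n phi j) * Rpower (Dj j) (d - 2) * RInt (kk d) (-T - ln (Dj j)) (T - ln (Dj j))) n).
    { unfold F. rewrite (proj2 (rsum_RInt fj n (-T) T (fun j Hj => fj_int j (-T) T Hj))).
      apply rsum_ext. intros k Hk. unfold fj. rewrite RInt_scalR.
      rewrite int_scale. ring. apply HD; auto.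
      apply (@ex_RInt_continuous R_CompleteNormedModule). intros.
      apply (ex_derive_continuous (fun v => exp (d * v) / (exp v + Dj k) ^ 2)).
      pose proof (HD k Hk). pose proof (exp_pos z). auto_derive. apply Rgt_not_eq. unfold Dj in *. cbv beta in *. nra. }
    rewrite RF. unfold S. rewrite Rmult_comm, <- rsum_scal, rsum_minus.
    eapply Rle_trans. apply rsum_abs. unfold Mb. rewrite Rmult_comm, <- rsum_scal.
    apply rsum_le. intros j Hj.
    replace (K T * (sin (th n phi j) * Rpower (Dj j) (d - 2)) -
       sin (th n phi j) * Rpower (Dj j) (d - 2) * RInt (kk d) (- T - ln (Dj j)) (T - ln (Dj j)))
      with (- (sin (th n phi j) * Rpower (Dj j) (d - 2) * (RInt (kk d) (- T - ln (Dj j)) (T - ln (Dj j)) - K T))) by ring.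
    rewrite Rabs_Ropp, !Rabs_mult.
    assert (HP : Rabs (Rpower (Dj j) (d - 2)) = Rpower (Dj j) (d - 2)) by (apply Rabs_right; left; apply exp_pos).
    rewrite HP.
    assert (Hc : Rabs (ln (Dj j)) <= T).
    { eapply Rle_trans; [|apply HT]. unfold Cmax. apply (rsum_ge_term (fun j => Rabs (ln (Dj j)))); auto.
      intros; apply Rabs_pos. }
    pose proof (shift_err d (ln (Dj j)) T Hd Hc) as SE. fold (K T) in SE.
    pose proof (Rabs_pos (sin (th n phi j))). pose proof (exp_pos ((d - 2) * ln (Dj j))).
    unfold Rpower in *.
    replace (exp (- (d * T)) * (Rabs (sin (th n phi j)) * exp ((d - 2) * ln (Dj j)) *
      (2 * Rabs (ln (Dj j)) * exp (d * Rabs (ln (Dj j))))))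
      with (Rabs (sin (th n phi j)) * exp ((d - 2) * ln (Dj j)) * (2 * Rabs (ln (Dj j)) * exp (d * Rabs (ln (Dj j))) * exp (- (d * T)))) by ring.
    apply Rmult_le_compat_l. apply Rmult_le_pos; lra. exact SE. }
  assert (Kpos : forall T, 1 <= T -> 0 < K 1 <= K T).
  { intros T HT. unfold K. replace (-1) with (- (1)) by ring. apply pos_int; auto. apply kk_cont. apply kk_pos. }
  destruct (Req_dec sn 0) as [Hs0|Hs0].
  - exists 1. split. lra. fold sn. rewrite Hs0.
    destruct (Req_dec S 0) as [HS|HS]. fold S. rewrite HS. ring. exfalso.
    assert (F0 : forall T, RInt F (-T) T = 0).
    { intro T. rewrite (RInt_ext _ (fun _ => 0)). rewrite (@RInt_const R_CompleteNormedModule).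
      unfold scal; simpl; unfold mult; simpl. ring.
      intros x _. destruct (Fsign x) as [q [_ Hq]]. rewrite Hq, Hs0. rewrite Ropp_0, Rmult_0_l. reflexivity. }
    destruct (Kpos 1 (Rle_refl 1)) as [K1 _].
    assert (Habs : 0 < Rabs S) by (apply Rabs_pos_lt; auto).
    destruct (exp_small d Mb (Rabs S * K 1) (Rmax 1 Cmax) ltac:(lra) HMb ltac:(nra)) as [T [HT1 HT2]].
    pose proof (Rmax_l 1 Cmax). pose proof (Rmax_r 1 Cmax).
    pose proof (Err T ltac:(lra)) as E. rewrite F0, Rminus_0_r, Rabs_mult in E.
    destruct (Kpos T ltac:(lra)) as [_ KT].
    rewrite (Rabs_right (K T)) in E by lra. nra.
  - set (g := fun v => F v / (- sn)).
    assert (gpos : forall v, 0 < g v).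
    { intro v. unfold g. destruct (Fsign v) as [q [Hq E]]. rewrite E. replace (- sn * q / - sn) with q by (field; auto). auto. }
    assert (gcont : forall v, continuous g v).
    { intro v. unfold g. apply (continuous_mult F (fun _ => / - sn)). auto. apply continuous_const. }
    assert (Fg : forall T, RInt F (-T) T = - sn * RInt g (-T) T).
    { intro T. rewrite <- RInt_scalR. apply RInt_ext. intros x _. unfold g. change (@eq R (F x) (- sn * (F x / - sn))). field. auto.
      apply (@ex_RInt_continuous R_CompleteNormedModule). intros; auto. }
    destruct (pos_int g 1 gcont gpos (Rle_refl 1)) as [G1 _].
    assert (Hsa : 0 < Rabs sn) by (apply Rabs_pos_lt; auto).
    destruct (exp_small d Mb (RInt g (-1) 1 * Rabs sn / 2) (Rmax 1 Cmax) ltac:(lra) HMb) as [T [HT1 HT2]].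
    { apply Rmult_lt_0_compat. nra. lra. }
    pose proof (Rmax_l 1 Cmax). pose proof (Rmax_r 1 Cmax).
    pose proof (Err T ltac:(lra)) as E. rewrite Fg in E.
    destruct (Kpos T ltac:(lra)) as [K1p KT].
    destruct (pos_int g T gcont gpos ltac:(lra)) as [_ GT].
    exists (S / - sn). split.
    + set (e := S * K T - - sn * RInt g (- T) T) in E.
      assert (Hw : S / - sn * K T = RInt g (-T) T + e / (- sn)) by (unfold e; field; auto).
      assert (He : Rabs (e / - sn) < RInt g (-1) 1 / 2).
      { unfold Rdiv. rewrite Rabs_mult, Rabs_inv, Rabs_Ropp.
        apply Rmult_lt_reg_r with (Rabs sn); auto. rewrite Rmult_assoc, Rinv_l by lra. lra. }
      pose proof (Rle_abs (- (e / - sn))). rewrite Rabs_Ropp in H1.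
      assert (0 < S / - sn * K T) by lra.
      destruct (Rle_dec (S / - sn) 0) as [Hle|Hle]; [|lra].
      assert (0 < K T) by lra.
      assert (S / - sn * K T <= 0) by nra. lra.
    + fold S. field. auto.
Qed.

Lemma sum_n_m_rsum (f : nat -> R) n : sum_n_m f 1 n = rsum (fun k => f (S k)) n.
Proof. induction n. rewrite sum_n_m_zero by lia. reflexivity.
  rewrite sum_n_Sm by lia. rewrite IHn. reflexivity. Qed.

Lemma rsum_pos f m : (forall k, (k < m)%nat -> 0 < f k) -> (1 <= m)%nat -> 0 < rsum f m.
Proof. induction m; intros H Hm. lia. simpl. destruct m.
  simpl. pose proof (H 0%nat ltac:(lia)). lra.
  pose proof (IHm ltac:(intros; apply H; lia) ltac:(lia)). pose proof (H (S m) ltac:(lia)). lra. Qed.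

Lemma ln_sqrt' x : 0 <= x -> ln (sqrt x) = ln x / 2.
Proof. intros [H|H]. rewrite <- Rpower_sqrt by auto. unfold Rpower. rewrite ln_exp. field. subst. rewrite sqrt_0. unfold ln.
  destruct (Rlt_dec 0 0) as [h|h]. exfalso; exact (Rlt_irrefl 0 h). field. Qed.

Lemma trig_D r x : (r - cos x) ^ 2 + sin x ^ 2 = 1 + r ^ 2 - 2 * r * cos x.
Proof. pose proof (sin2_cos2 x). unfold Rsqr in H.
  transitivity (r ^ 2 - 2 * r * cos x + (sin x * sin x + cos x * cos x)). ring. rewrite H. ring. Qed.

Lemma term_deriv alpha r c t : 1 < alpha < 3 ->
  0 < 1 + r ^ 2 - 2 * r * cos (c - t) ->
  is_derive (fun u => phi_alpha alpha (dist_ring r (c - u))) t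
    (r * sin (c - t) * Rpower (1 + r ^ 2 - 2 * r * cos (c - t)) ((3 - alpha) / 2 - 2)).
Proof.
  intros Ha HD.
  apply (is_derive_ext (fun u => exp ((1 - alpha) / 2 * ln ((r - cos (c - u)) ^ 2 + sin (c - u) ^ 2)) / (alpha - 1))).
  { intro u. unfold phi_alpha, dist_ring, Rpower. rewrite ln_sqrt'.
    f_equal. f_equal. field. pose proof (pow2_ge_0 (r - cos (c - u))). pose proof (pow2_ge_0 (sin (c - u))). lra. }

  assert (E : Rpower (1 + r ^ 2 - 2 * r * cos (c - t)) ((3 - alpha) / 2 - 2) =
     exp ((1 - alpha) / 2 * ln (1 + r ^ 2 - 2 * r * cos (c - t))) / (1 + r ^ 2 - 2 * r * cos (c - t))).
  { unfold Rpower. replace (((3 - alpha) / 2 - 2) * ln (1 + r ^ 2 - 2 * r * cos (c - t)))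
      with ((1 - alpha) / 2 * ln (1 + r ^ 2 - 2 * r * cos (c - t)) + - ln (1 + r ^ 2 - 2 * r * cos (c - t))) by field.
    rewrite exp_plus, exp_Ropp, exp_ln by auto. field. lra. }
  rewrite E.
  set (c0 := c) in *.
  assert (EqD : (r + - cos (c0 - t)) * ((r + - cos (c0 - t)) * 1) + sin (c0 - t) * (sin (c0 - t) * 1) = 1 + r^2 - 2*r*cos(c0 - t))
    by (rewrite <- trig_D; ring).
  auto_derive; replace (c0 + - t) with (c0 - t) by ring; rewrite EqD.
  - auto.
  - field. split; lra.
Qed.

Lemma is_derive_eq (f : R -> R) x l l' : is_derive f x l -> l = l' -> is_derive f x l'.
Proof. intros H ->; exact H. Qed.

Lemma s_const_pos alpha n : (2 <= n)%nat -> 0 < s_const alpha n.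
Proof. intros Hn. unfold s_const. apply Rmult_lt_0_compat. apply exp_pos.
  rewrite sum_n_m_rsum. apply rsum_pos. intros; apply exp_pos. lia. Qed.

Definition Ssum alpha n r phi :=
  rsum (fun j => sin (th n phi j) * Rpower (1 + r ^ 2 - 2 * r * cos (th n phi j)) ((3 - alpha) / 2 - 2)) n.

Lemma V_deriv alpha mu n r phi : 1 < alpha < 3 -> 
  (forall k, (k < n)%nat -> 0 < 1 + r ^ 2 - 2 * r * cos (th n phi k)) ->
  is_derive (fun t => V alpha mu n r t) phi (r / (s_const alpha n + mu) * Ssum alpha n r phi).
Proof.
  intros Ha HD.
  set (c := / (s_const alpha n + mu)).
  apply (is_derive_ext (fun t => (r ^ 2 / 2 + mu / (s_const alpha n + mu) * phi_alpha alpha r) +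
     rsum (fun k => c * phi_alpha alpha (dist_ring r (INR (S k) * zeta n - t))) n)).
  { intro t. unfold V. rewrite sum_n_m_rsum. reflexivity. }
  eapply is_derive_eq.
  apply (is_derive_plus (fun _ => r ^ 2 / 2 + mu / (s_const alpha n + mu) * phi_alpha alpha r)).
  apply is_derive_const.
  apply (rsum_derive (fun k t => c * phi_alpha alpha (dist_ring r (INR (S k) * zeta n - t)))
     (fun k => c * (r * sin (th n phi k) * Rpower (1 + r ^ 2 - 2 * r * cos (th n phi k)) ((3 - alpha) / 2 - 2)))).
  intros k Hk. apply (is_derive_scal (fun t => phi_alpha alpha (dist_ring r (INR (S k) * zeta n - t)))).
  apply term_deriv; auto. apply HD; auto.
  unfold Ssum. rewrite plus_zero_l.
  rewrite (rsum_ext _ (fun j => (c * r) * (sin (th n phi j) * Rpower (1 + r ^ 2 - 2 * r * cos (th n phi j)) ((3 - alpha) / 2 - 2)))).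
  rewrite rsum_scal. unfold c. unfold Rdiv. match goal with |- ?a = ?b => change (@eq R a b) end. ring.
  intros; ring.
Qed.

Theorem mainTheorem9 (alpha mu : R) (n : nat) :
  1 < alpha < 3 -> (2 <= n)%nat -> 0 <= mu ->
  exists omega : R -> R -> R,
    forall r varphi : R, in_domain n r varphi ->
      0 < omega r varphi /\
      is_derive (fun t => V alpha mu n r t) varphi
                (- sin (INR n * varphi) * omega r varphi).
Proof.
  intros Ha Hn Hmu.
  pose proof (s_const_pos alpha n Hn) as Hs.
  exists (fun r phi => if Req_EM_T (sin (INR n * phi)) 0 then 1
     else r / (s_const alpha n + mu) * Ssum alpha n r phi / (- sin (INR n * phi))).
  intros r phi [Hr Hdom].
  assert (HD : forall k, (k < n)%nat -> 0 < 1 + r ^ 2 - 2 * r * cos (th n phi k)).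
  { intros k Hk. rewrite <- trig_D.
    pose proof (pow2_ge_0 (r - cos (th n phi k))). pose proof (pow2_ge_0 (sin (th n phi k))).
    destruct (Rle_lt_or_eq_dec 0 _ (Rplus_le_le_0_compat _ _ H H0)) as [Hlt|Heq]; auto.
    exfalso. apply (Hdom (S k)).
    assert (E1 : r - cos (th n phi k) = 0) by nra.
    assert (E2 : sin (th n phi k) = 0) by nra.
    replace (INR (S k) * zeta n) with (th n phi k + phi) by (unfold th; ring).
    rewrite cos_plus, sin_plus, E2. split; nra. }
  pose proof (V_deriv alpha mu n r phi Ha HD) as Dv.
  destruct (key_main n phi r ((3 - alpha) / 2) ltac:(lia) Hr ltac:(lra) HD) as [w [Hw Ew]].
  fold (Ssum alpha n r phi) in Ew.
  destruct (Req_EM_T (sin (INR n * phi)) 0) as [H0|H0].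
  - split. lra. eapply is_derive_eq. exact Dv. match goal with |- ?a = ?b => change (@eq R a b) end. rewrite Ew, H0. ring.
  - split.
    + rewrite Ew. replace (r / (s_const alpha n + mu) * (- sin (INR n * phi) * w) / - sin (INR n * phi))
        with (r / (s_const alpha n + mu) * w) by (field; lra).
      apply Rmult_lt_0_compat; auto. apply Rdiv_lt_0_compat; lra.
    + eapply is_derive_eq. exact Dv. match goal with |- ?a = ?b => change (@eq R a b) end. field. split; auto; lra.
Qed.
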